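(* Let $T$ be a tree rooted at a vertex $r$, and let $x_1,\dots,x_t$ be the vertices of height one (non-root vertices all of whose children are leaves and which have at least one child). For each $i$, let $v_i$ be the non-leaf neighbor (parent) of $x_i$, let $k_i$ be the number of leaves adjacent to $v_i$, and let $r_i$ be the number of leaves adjacent to $x_i$. (1) If $k_i\ge1$ and $r_i\ge2$ for some $i$, then $b_{tR}(T)=1$. (2) If $k_i\ge 2$ and $r_i=1$ for some $i$, then $b_{tR}(T)\le \deg(v_i)-k_i$. (3) For integers $t\ge3$ and $2\le k\le t-1$, $b_{tR}(S(k,t))=t-k$.
   Context: A TRDF on $G=(V,E)$ is a function $f:V\to\{0,1,2\}$ such that every $v$ with $f(v)=0$ has a neighbor $u$ with $f(u)=2$ and the subgraph induced by $\{v:f(v)>0\}$ has no isolated vertices; $\gamma_{tR}(G)$ is its minimum weight. $b_{tR}(G)$ is the minimum $|E'|$ such that $G-E'$ has no isolated vertices and $\gamma_{tR}(G-E')>\gamma_{tR}(G)$ ($\infty$ if none). In a rooted tree, the height of a vertex $x$ is the length of a longest path from $x$ down to a leaf descendant. For $t\ge 2$, $k\ge1$, the wounded spider $S(k,t)$ is the star $K_{1,t}$ with $t-k$ of its edges subdivided once. *)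

(* Defs.v *)
From mathcomp Require Import all_boot.
Set Implicit Arguments. Unset Strict Implicit. Unset Printing Implicit Defensive.

Section Graphs.
Variable V : finType.

Definition simple_graph (e : rel V) : Prop := symmetric e /\ irreflexive e.

Definition is_tree (e : rel V) : Prop :=
  [/\ simple_graph e,
      (forall x y, connect e x y) &
      (forall c : seq V, uniq c -> 3 <= size c -> ~~ cycle e c)].

Definition nbhd (e : rel V) (x : V) : {set V} := [set y | e x y].
Definition deg (e : rel V) (x : V) : nat := #|nbhd e x|.
Definition leaf (e : rel V) (x : V) : bool := deg e x == 1.

Definition edges (e : rel V) : {set {set V}} :=
  [set s : {set V} | [exists x, exists y, e x y && (s == [set x; y])]].

Definition del_edges (e : rel V) (E' : {set {set V}}) : rel V :=
  [rel x y | e x y && ([set x; y] \notin E')].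

Definition no_isolated (e : rel V) : bool := [forall x, exists y, e x y].

Definition is_TRDF (e : rel V) (f : {ffun V -> 'I_3}) : bool :=
  [forall v, ((f v == 0 :> nat) ==> [exists u, e v u && (f u == 2 :> nat)])
          && ((0 < f v) ==> [exists u, e v u && (0 < f u)])].

Definition weight (f : {ffun V -> 'I_3}) : nat := \sum_v (f v : nat).

(* Minimum weight of a TRDF (the default 2|V| is only reached when no TRDF
   exists; it is never used for graphs without isolated vertices). *)
Definition gamma_tR (e : rel V) : nat :=
  \big[minn/(2 * #|V|)]_(f | is_TRDF e f) weight f.

Definition tR_bondage_set (e : rel V) (E' : {set {set V}}) : bool :=
  [&& E' \subset edges e, no_isolated (del_edges e E')
    & gamma_tR e < gamma_tR (del_edges e E')].

(* b_tR(G); None encodes infinity. *)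
Definition b_tR (e : rel V) : option nat :=
  if [exists E', tR_bondage_set e E']
  then Some (\big[minn/#|edges e|]_(E' | tR_bondage_set e E') #|E'|)
  else None.

(* Rooted trees: y is a child of x (w.r.t. root r) iff y is adjacent to x
   and x lies on the r--y path, i.e. deleting x separates y from r. *)
Definition child (e : rel V) (r x y : V) : bool :=
  e x y && ~~ connect [rel a b | [&& e a b, a != x & b != x]] r y.

Definition height_one (e : rel V) (r x : V) : bool :=
  [&& x != r, [exists y, child e r x y] & [forall y, child e r x y ==> leaf e y]].

Definition nleaves (e : rel V) (x : V) : nat := #|[set y | e x y && leaf e y]|.

End Graphs.

(* Wounded spider S(k,t): center, t leg ends, t-k subdivision vertices.
   Leg end i (i < t-k) is attached to subdivision vertex i, which is attached
   to the center; leg ends i >= t-k are attached directly to the center. *)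
Definition spider_vert (k t : nat) : finType := ((unit + 'I_t) + 'I_(t - k))%type.

Definition spider_base (k t : nat) (a b : spider_vert k t) : bool :=
  match a, b with
  | inl (inl _), inl (inr i) => t - k <= i
  | inl (inl _), inr _ => true
  | inr j, inl (inr i) => (i : nat) == j
  | _, _ => false
  end.

Definition spider_rel (k t : nat) : rel (spider_vert k t) :=
  [rel a b | spider_base a b || spider_base b a].
Arguments spider_rel : clear implicits.

(* Main.v *)
Require Import Defs.
From mathcomp Require Import all_boot zify.
From Stdlib Require Import Lia.
Set Implicit Arguments. Unset Strict Implicit. Unset Printing Implicit Defensive.

Section Gen.
Variable V : finType.
Implicit Types (e : rel V) (f g : {ffun V -> 'I_3}).

Lemma weight_le2 f : weight f <= 2 * #|V|.
Proof.
apply: (@leq_trans (\sum_(v : V) 2)).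
  by apply: leq_sum => i _; case: (f i) => [[|[|[|]]]].
by rewrite sum_nat_const mulnC.
Qed.

Lemma bigmin_le_seq (I : eqType) (s : seq I) (d : nat) (F : I -> nat) i :
  i \in s -> \big[minn/d]_(j <- s) F j <= F i.
Proof.
elim: s => // a s IH; rewrite inE big_cons => /orP[/eqP->|/IH H].
  exact: geq_minl.
exact: leq_trans (geq_minr _ _) H.
Qed.

Lemma bigmin_le (I : finType) (P : pred I) (d : nat) (F : I -> nat) i :
  P i -> \big[minn/d]_(j | P j) F j <= F i.
Proof.
move=> Pi; rewrite -big_filter; apply: bigmin_le_seq.
by rewrite mem_filter Pi mem_index_enum.
Qed.

Lemma gamma_le e f : is_TRDF e f -> gamma_tR e <= weight f.
Proof. exact: bigmin_le. Qed.

Lemma gamma_ge e m : (forall f, is_TRDF e f -> m <= weight f) ->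
  (exists f, is_TRDF e f) -> m <= gamma_tR e.
Proof.
move=> H [f0 Hf0]; rewrite /gamma_tR; apply: (big_ind (fun n => m <= n)).
- exact: leq_trans (H _ Hf0) (weight_le2 f0).
- by move=> a b Ha Hb; rewrite leq_min Ha Hb.
- exact: H.
Qed.

Definition ones : {ffun V -> 'I_3} := [ffun=> inord 1].

Lemma ones_TRDF e : no_isolated e -> is_TRDF e ones.
Proof.
move=> /forallP Hn; apply/forallP => v; rewrite !ffunE inordK //=.
have [u Hu] := existsP (Hn v).
by apply/existsP; exists u; rewrite Hu ffunE inordK.
Qed.

Lemma gamma_attained e : no_isolated e ->
  exists g, is_TRDF e g /\ gamma_tR e = weight g.
Proof.
move=> Hn; have H1 := ones_TRDF Hn.
case: (arg_minnP (@weight V) H1) => g Hg Hmin.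
exists g; split => //; apply/eqP; rewrite eqn_leq gamma_le //.
by apply: gamma_ge; [exact: Hmin | exists g].
Qed.


Lemma bigmin_eq (I : finType) (P : pred I) (d m : nat) (F : I -> nat) i0 :
  P i0 -> F i0 = m -> (forall i, P i -> m <= F i) -> m <= d ->
  \big[minn/d]_(j | P j) F j = m.
Proof.
move=> P0 F0 H Hd; apply/eqP; rewrite eqn_leq.
rewrite -{1}F0 bigmin_le //=.
apply: (big_ind (fun n => m <= n)) => // a b Ha Hb; by rewrite leq_min Ha Hb.
Qed.

Lemma edges_card_le e (E : {set {set V}}) : E \subset edges e -> #|E| <= #|edges e|.
Proof. exact: subset_leq_card. Qed.

Lemma btR_eq e (E0 : {set {set V}}) m : tR_bondage_set e E0 -> #|E0| = m ->
  (forall E, tR_bondage_set e E -> m <= #|E|) -> b_tR e = Some m.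
Proof.
move=> B0 C0 H; rewrite /b_tR.
have -> : [exists E', tR_bondage_set e E'] by apply/existsP; exists E0.
congr Some; apply: (bigmin_eq B0 C0 H).
rewrite -C0; apply: edges_card_le; by case/and3P: B0.
Qed.

Lemma btR_le e (E0 : {set {set V}}) : tR_bondage_set e E0 ->
  exists b, b_tR e = Some b /\ b <= #|E0|.
Proof.
move=> B0; rewrite /b_tR.
have -> : [exists E', tR_bondage_set e E'] by apply/existsP; exists E0.
by eexists; split; [reflexivity| apply: bigmin_le].
Qed.

Lemma TRDF_ext e1 e2 f : e1 =2 e2 -> is_TRDF e1 f = is_TRDF e2 f.
Proof.
move=> E; apply: eq_forallb => v.
have H1 : forall P : pred V, [exists u, e1 v u && P u] = [exists u, e2 v u && P u].
  by move=> P; apply: eq_existsb => u; rewrite E.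
by rewrite !H1.
Qed.

Lemma gamma_ext e1 e2 : e1 =2 e2 -> gamma_tR e1 = gamma_tR e2.
Proof. by move=> E; apply: eq_bigl => f; apply: TRDF_ext. Qed.

Lemma bond_pos e (E : {set {set V}}) : tR_bondage_set e E -> 0 < #|E|.
Proof.
case/and3P => _ _; rewrite card_gt0; apply: contraTneq => ->.
rewrite (@gamma_ext _ e) ?ltnn // => x y /=; by rewrite /del_edges /= in_set0 andbT.
Qed.

End Gen.

Section Improve.
Variable V : finType.
Implicit Types (e : rel V) (f g : {ffun V -> 'I_3}).

Lemma leaf_nb e u a w : leaf e u -> e u a -> e u w -> w = a.
Proof.
move=> /cards1P[c Hc] ua uw.
have : a \in nbhd e u by rewrite inE.
have : w \in nbhd e u by rewrite inE.
by rewrite Hc !inE => /eqP-> /eqP->.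
Qed.

Lemma weight_split (h : {ffun V -> 'I_3}) a (L : {set V}) : a \notin L ->
  weight h = h a + \sum_(u in L) h u + \sum_(u | (u != a) && (u \notin L)) h u.
Proof.
move=> aL; rewrite /weight (bigD1 a) //= (bigID (fun u => u \in L)) /= addnA.
congr (_ + _ + _); apply: eq_bigl => u; case: eqP => // ->.
by rewrite (negbTE aL).
Qed.

Lemma improve e e' a b g :
  symmetric e -> irreflexive e -> (forall u w, e' u w -> e u w) ->
  is_TRDF e' g -> e a b -> ~~ leaf e b -> 0 < g b ->
  3 <= g a + \sum_(u in [set u | e a u && leaf e u]) g u ->
  exists f, is_TRDF e f /\ weight f < weight g.
Proof.
move=> sym irr sub Hg ab nlb gb H3.
set L := [set u | e a u && leaf e u] in H3 *.
have aL : a \notin L by rewrite inE irr.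
have bL : b \notin L by rewrite inE (negbTE nlb) andbF.
have ba : b != a by apply/eqP => E; move: ab; rewrite E irr.
pose f := [ffun u => if u == a then inord 2 else if u \in L then (ord0 : 'I_3) else g u].
have fa : f a = 2 :> nat by rewrite ffunE eqxx inordK.
have fL u : u \in L -> f u = 0 :> nat.
  by move=> uL; rewrite ffunE uL; case: eqP => // ua; move: aL; rewrite -ua uL.
have fo u : u != a -> u \notin L -> f u = g u.
  by move=> ua uL; rewrite ffunE (negbTE ua) (negbTE uL).
have Lnb u w : w \in L -> e u w -> u = a.
  rewrite inE => /andP[aw lw] uw; apply: (leaf_nb lw); by rewrite sym.
exists f; split.
  apply/forallP => v; have /forallP/(_ v)/andP[H0 Hp] := Hg.
  case: (eqVneq v a) => [->|va].
    rewrite fa /=; apply/existsP; exists b; rewrite ab /= fo //.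
  case: (boolP (v \in L)) => [vL|vL].
    rewrite fL //=; rewrite andbT; apply/existsP; exists a; rewrite fa andbT.
    by move: vL; rewrite inE sym => /andP[].
  rewrite fo //; apply/andP; split.
    apply/implyP => /(implyP H0)/existsP[w /andP[vw gw]]; apply/existsP; exists w.
    rewrite (sub _ _ vw) /=.
    case: (eqVneq w a) => [->|wa]; first by rewrite fa.
    case: (boolP (w \in L)) => [wL|wL]; first by rewrite (Lnb _ _ wL (sub _ _ vw)) eqxx in va.
    by rewrite fo.
  apply/implyP => /(implyP Hp)/existsP[w /andP[vw gw]]; apply/existsP; exists w.
  rewrite (sub _ _ vw) /=.
  case: (eqVneq w a) => [->|wa]; first by rewrite fa.
  case: (boolP (w \in L)) => [wL|wL]; first by rewrite (Lnb _ _ wL (sub _ _ vw)) eqxx in va.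
  by rewrite fo.
rewrite (weight_split f aL) (weight_split g aL) fa.
rewrite big1 ?addn0; last by move=> u uL; rewrite fL.
rewrite (eq_bigr (fun u => g u : nat)); last by move=> u /andP[ua uL]; rewrite fo.
by rewrite ltn_add2r.
Qed.

End Improve.

Section Star.
Variable V : finType.
Implicit Types (e : rel V) (f g : {ffun V -> 'I_3}).

Lemma trdf0 e g u : is_TRDF e g -> g u = 0 :> nat -> exists w, e u w /\ g w = 2 :> nat.
Proof.
move=> /forallP/(_ u)/andP[H _] /eqP/(implyP H)/existsP[w /andP[uw /eqP gw]].
by exists w.
Qed.

Lemma trdfp e g u : is_TRDF e g -> 0 < g u -> exists w, e u w /\ 0 < g w.
Proof.
move=> /forallP/(_ u)/andP[_ H] /(implyP H)/existsP[w /andP[uw gw]].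
by exists w.
Qed.

Lemma leaf_pos e g u a : is_TRDF e g -> (forall w, e u w -> w = a) -> 0 < g a.
Proof.
move=> Hg Hu; case: (posnP (g u)) => [/(trdf0 Hg)[w [uw gw]]|/(trdfp Hg)[w [uw gw]]].
  by rewrite -(Hu _ uw) gw.
by rewrite -(Hu _ uw).
Qed.

Lemma star_bound e g a (I : finType) (phi : I -> V) (A : {set I}) i1 i2 :
  is_TRDF e g -> i1 \in A -> i2 \in A -> i1 != i2 ->
  (forall i w, i \in A -> e (phi i) w -> w = a) ->
  2 <= g a + \sum_(i in A) g (phi i) /\
  ((forall w, e a w -> exists2 i, i \in A & w = phi i) ->
     3 <= g a + \sum_(i in A) g (phi i)).
Proof.
move=> Hg A1 A2 d12 Hnb.
have ga : 0 < g a by apply: (leaf_pos (u := phi i1) Hg) => w; apply: Hnb.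
have Hs : g (phi i1) + g (phi i2) <= \sum_(i in A) g (phi i).
  rewrite (bigD1 i1) //= (bigD1 i2) /=; last by rewrite A2 eq_sym.
  by rewrite addnA leq_addr.
case Ea: (g a : nat) ga => [|[|[|n]]] // _.
- have p i : i \in A -> 0 < g (phi i).
    move=> iA; case: (posnP (g (phi i))) => // /(trdf0 Hg)[w [uw gw]].
    by move: gw; rewrite (Hnb _ _ iA uw) Ea.
  have := p _ A1; have := p _ A2; split; [lia | move=> _; lia].
- split; first lia.
  move=> Hn; have [w [aw gw]] := trdfp Hg (u := a) (ltac:(by rewrite Ea)).
  have [i iA wi] := Hn _ aw.
  have : g (phi i) <= \sum_(i in A) g (phi i) by rewrite (bigD1 i) //= leq_addr.
  rewrite -wi; lia.
Qed.

End Star.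

Section Tree.
Variable V : finType.
Implicit Types (e : rel V).

Lemma path_avoid (E : rel V) x z p :
  (forall a b, E a b -> b != x) -> path E z p -> x \notin p.
Proof.
move=> H; elim: p z => //= a p IH z /andP[za pa].
by rewrite inE negb_or eq_sym (H _ _ za) (IH _ pa).
Qed.

Lemma nb_child e r x v y : is_tree e -> e x v -> ~~ child e r x v -> e x y ->
  y != v -> child e r x y.
Proof.
move=> [[sym irr] _ acyc] xv; rewrite /child xv /= negbK => Crv xy yv.
rewrite xy /=; apply/negP => Cry.
set E := [rel a b | [&& e a b, a != x & b != x]] in Crv Cry.
have symE : symmetric E by move=> a b /=; rewrite sym; case: (e b a); case: (a != x); case: (b != x).
have Cvy : connect E v y.
  apply: connect_trans _ Cry; by rewrite (sym_connect_sym symE).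
case/connectP: Cvy => p pE ly.
move: ly; case: (shortenP pE) => p' pE' up' _ ly'.
have xp' : x \notin p' by apply: (path_avoid (E := E)) pE' => a b /and3P[].
have vx : v != x by apply/eqP => E0; move: xv; rewrite E0 irr.
have U : uniq (x :: v :: p') by rewrite cons_uniq up' andbT inE negb_or eq_sym vx xp'.
have S : 3 <= size (x :: v :: p').
  case: p' {pE' up' xp' U} ly' => [/= E0|]; last by [].
  by move: yv; rewrite E0 eqxx.
move/negP: (acyc _ U S); apply.
rewrite /cycle /= xv /= rcons_path (sub_path _ pE') /=.
  by rewrite -ly' sym.
by move=> a b /and3P[].
Qed.

End Tree.

Section Parts.
Variable V : finType.
Implicit Types (e : rel V).

Lemma set2_eq (a b c d : V) : [set a; b] = [set c; d] ->
  (a = c /\ b = d) \/ (a = d /\ b = c).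
Proof.
move=> E.
have : a \in [set c; d] by rewrite -E set21.
have : b \in [set c; d] by rewrite -E set22.
have : c \in [set a; b] by rewrite E set21.
have : d \in [set a; b] by rewrite E set22.
move=> /set2P[]H1 /set2P[]H2 /set2P[]H3 /set2P[]H4; subst; auto.
Qed.

Lemma tree_noiso e x v u : is_tree e -> e x v -> exists w, e u w.
Proof.
move=> [[sym irr] conn _] xv.
have [z uz] : exists z, z != u.
  case: (eqVneq x u) => [xu|]; last by exists x.
  by exists v; apply/eqP => vu; move: xv; rewrite vu xu irr.
case/connectP: (conn u z) => [[|w p]] /=; first by move=> _ E; rewrite E eqxx in uz.
by case/andP => uw _ _; exists w.
Qed.

Lemma del_sub e E u w : del_edges e E u w -> e u w.
Proof. by case/andP. Qed.

Lemma edge_in e a b : e a b -> [set a; b] \in edges e.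
Proof. by move=> ab; rewrite inE; apply/existsP; exists a; apply/existsP; exists b; rewrite ab eqxx. Qed.

Lemma deg_ge2 e u a b : e u a -> e u b -> a != b -> ~~ leaf e u.
Proof.
move=> ua ub ab; rewrite /leaf /deg; apply/negP => /eqP H.
have : 1 < #|nbhd e u| by apply/card_gt1P; exists a, b; rewrite !inE ua ub.
by rewrite H.
Qed.

Lemma part1 e r x v : is_tree e -> height_one e r x -> e x v -> ~~ child e r x v ->
  1 <= nleaves e v -> 2 <= nleaves e x -> b_tR e = Some 1.
Proof.
move=> T hx xv nxv; have [[sym irr] _ _] := T.
case/and3P: hx => _ _ /forallP hxl.
rewrite /nleaves => /card_gt0P[w]; rewrite inE => /andP[vw lw].
move=> /card_gt1P[y1 [y2 [+ + y12]]]; rewrite !inE => /andP[xy1 ly1] /andP[xy2 ly2].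
have nlx : ~~ leaf e x by apply: (deg_ge2 xy1 xy2).
have wx : w != x by apply: contraNneq nlx => <-.
have nlv : ~~ leaf e v by apply: (deg_ge2 vw (b := x)) => //; rewrite sym.
have y1v : y1 != v by apply: contraNneq nlv => <-.
set E0 := [set [set x; v]].
have inE0 a b : ([set a; b] \in E0) = ([set a; b] == [set x; v]) by rewrite inE.
have Ni : no_isolated (del_edges e E0).
  apply/forallP => u; apply/existsP.
  case: (eqVneq u x) => [->|ux].
    exists y1; rewrite /del_edges /= xy1 inE0 /=; apply/negP => /eqP/set2_eq.
    by case=> [[_ E1]|[E1 E2]]; [rewrite E1 eqxx in y1v | move: xv; rewrite -E1 irr].
  case: (eqVneq u v) => [->|uv].
    exists w; rewrite /del_edges /= vw inE0 /=; apply/negP => /eqP/set2_eq.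
    by case=> [[E1 _]|[_ E2]]; [move: xv; rewrite E1 irr | rewrite E2 eqxx in wx].
  have [z uz] := tree_noiso u T xv.
  exists z; rewrite /del_edges /= uz inE0 /=; apply/negP => /eqP/set2_eq.
  by case=> [[E1 _]|[E1 _]]; [rewrite E1 eqxx in ux | rewrite E1 eqxx in uv].
have B : tR_bondage_set e E0.
  apply/and3P; split => //.
    by apply/subsetP => s; rewrite inE => /eqP->; apply: edge_in.
  have [g [Hg ->]] := gamma_attained Ni.
  have sub := @del_sub e E0.
  have gv : 0 < g v.
    apply: (leaf_pos (u := w) Hg) => z /sub wz; apply: (leaf_nb lw) => //; by rewrite sym.
  set Lx := [set u | e x u && leaf e u].
  have H3 : 3 <= g x + \sum_(u in Lx) g u.
    have := @star_bound _ _ g x V id Lx y1 y2 Hg.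
    rewrite !inE xy1 ly1 xy2 ly2 => /(_ isT isT y12) [].
      move=> i z; rewrite inE => /andP[xi li] /sub iz.
      by apply: (leaf_nb li) => //; rewrite sym.
    move=> _; apply => z /andP[xz]; rewrite inE0 => nz.
    exists z => //; rewrite inE xz /=.
    have zv : z != v by apply: contraNneq nz => ->.
    have cz := nb_child T xv nxv xz zv.
    exact: (implyP (hxl z) cz).
  have [f [Hf Hw]] := improve sym irr sub Hg xv nlv gv H3.
  exact: leq_ltn_trans (gamma_le Hf) Hw.
apply: (btR_eq B); first by rewrite cards1.
exact: bond_pos.
Qed.


Lemma part2 e r x v : is_tree e -> height_one e r x -> e x v -> ~~ child e r x v ->
  2 <= nleaves e v -> nleaves e x = 1 ->
  exists b, b_tR e = Some b /\ b <= deg e v - nleaves e v.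
Proof.
move=> T hx xv nxv; have [[sym irr] _ _] := T.
case/and3P: hx => _ /existsP[y cy] /forallP hxl.
have ly : leaf e y := implyP (hxl y) cy.
have xy : e x y by case/andP: cy.
have yv : y != v by apply: contraNneq nxv => <-.
rewrite /nleaves => /card_gt1P[w1 [w2 [+ + w12]]]; rewrite !inE => /andP[vw1 lw1] /andP[vw2 lw2] _.
have nlv : ~~ leaf e v by apply: (deg_ge2 vw1 vw2).
have nlx : ~~ leaf e x by apply: (deg_ge2 xy xv).
have vx : e v x by rewrite sym.
set N := [set z | e v z && ~~ leaf e z].
set E0 := [set [set v; z] | z in N].
have inE0 a b : [set a; b] \in E0 -> exists2 z, z \in N & (a = v /\ b = z) \/ (a = z /\ b = v).
  by case/imsetP => z zN /set2_eq H; exists z.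
have neqv z : z \in N -> z != v.
  by rewrite inE => /andP[vz _]; apply: contraTneq vz => ->; rewrite irr.
have Ni : no_isolated (del_edges e E0).
  apply/forallP => u; apply/existsP.
  case: (eqVneq u v) => [->|uv].
    exists w1; rewrite /del_edges /= vw1 /=; apply/negP => /inE0[z zN [[_ E1]|[E1 _]]].
      by move: zN; rewrite inE -E1 lw1 andbF.
    by move: (neqv _ zN); rewrite -E1 eqxx.
  case: (boolP (u \in N)) => [uN|uN].
    have [vu nlu] : e v u /\ ~~ leaf e u by move: uN; rewrite inE => /andP.
    have [z [uz zv]] : exists z, e u z /\ z != v.
      move: nlu; rewrite /leaf /deg.
      have : 0 < #|nbhd e u| by apply/card_gt0P; exists v; rewrite inE sym.
      move=> H0 H1; have : 1 < #|nbhd e u| by rewrite ltn_neqAle eq_sym H1.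
      case/card_gt1P => a [b [+ + ab]]; rewrite !inE => ua ub.
      case: (eqVneq a v) => [av|av]; last by exists a.
      by exists b; split => //; rewrite -av eq_sym.
    exists z; rewrite /del_edges /= uz /=; apply/negP => /inE0[z' _ [[E1 _]|[_ E2]]].
      by rewrite E1 eqxx in uv.
    by rewrite E2 eqxx in zv.
  have [z uz] := tree_noiso u T xv.
  exists z; rewrite /del_edges /= uz /=; apply/negP => /inE0[z' zN [[E1 _]|[E1 _]]].
    by rewrite E1 eqxx in uv.
  by move: uN; rewrite E1 zN.
have B : tR_bondage_set e E0.
  apply/and3P; split => //.
    by apply/subsetP => s /imsetP[z]; rewrite inE => /andP[vz _] ->; apply: edge_in.
  have [g [Hg ->]] := gamma_attained Ni.
  have sub := @del_sub e E0.
  have gx : 0 < g x.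
    apply: (leaf_pos (u := y) Hg) => z /sub yz; apply: (leaf_nb ly) => //; by rewrite sym.
  set Lv := [set u | e v u && leaf e u].
  have H3 : 3 <= g v + \sum_(u in Lv) g u.
    have := @star_bound _ _ g v V id Lv w1 w2 Hg.
    rewrite !inE vw1 lw1 vw2 lw2 => /(_ isT isT w12) [].
      move=> i z; rewrite inE => /andP[vi li] /sub iz.
      by apply: (leaf_nb li) => //; rewrite sym.
    move=> _; apply => z /andP[vz nz].
    exists z => //; rewrite inE vz /=.
    apply: contraNT nz => lz; apply/imsetP; exists z => //.
    by rewrite inE vz lz.
  have [f [Hf Hw]] := improve sym irr sub Hg vx nlx gx H3.
  exact: leq_ltn_trans (gamma_le Hf) Hw.
have [b [Hb Hle]] := btR_le B.
exists b; split => //; apply: (leq_trans Hle).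
have -> : #|E0| = #|N|.
  apply: card_in_imset => z1 z2 z1N z2N /set2_eq [[_ ->]|[E1 _]] //.
  by move: (neqv _ z2N); rewrite -E1 eqxx.
have := cardsID [set z | leaf e z] (nbhd e v).
have -> : nbhd e v :&: [set z | leaf e z] = [set y | e v y && leaf e y].
  by apply/setP => z; rewrite !inE.
have -> : nbhd e v :\: [set z | leaf e z] = N.
  by apply/setP => z; rewrite !inE andbC.
rewrite /deg => <-; by rewrite /nleaves addKn.
Qed.

End Parts.

Section Spider.
Variables k t : nat.
Hypothesis kt : 2 <= k <= t.-1.
Hypothesis t3 : 3 <= t.

Local Notation V := (spider_vert k t).
Local Notation e := (spider_rel k t).
Definition cc : V := inl (inl tt).
Definition DD (i : 'I_t) : V := inl (inr i).
Definition SS (j : 'I_(t - k)) : V := inr j.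
Lemma le_tk : t - k <= t. Proof. exact: leq_subr. Qed.
Definition LL (j : 'I_(t - k)) : V := DD (widen_ord le_tk j).

Lemma weight_sp (g : {ffun V -> 'I_3}) :
  weight g = g cc + \sum_(i < t) g (DD i) + \sum_(j < t - k) g (SS j).
Proof.
by rewrite /weight big_sumType /= big_sumType /= (big_pred1 tt).
Qed.


Lemma spE (a b : V) : e a b = spider_base a b || spider_base b a. Proof. by []. Qed.

Lemma e_cD (i : 'I_t) : e cc (DD i) = (t - k <= i). Proof. by rewrite spE /= orbF. Qed.
Lemma e_cS j : e cc (SS j). Proof. by rewrite spE. Qed.
Lemma e_DS (i : 'I_t) (j : 'I_(t-k)) : e (DD i) (SS j) = (val i == val j). Proof. by rewrite spE. Qed.

Lemma nbD (i : 'I_t) (w : V) : t - k <= i -> e (DD i) w -> w = cc.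
Proof.
move=> H; rewrite spE; case: w => [[[]|i']|j] //=; rewrite ?orbF //=.
by move=> /eqP E; move: H; rewrite E leqNgt ltn_ord.
Qed.

Lemma nbL (j : 'I_(t - k)) (w : V) : e (LL j) w -> w = SS j.
Proof.
rewrite spE; case: w => [[[]|i']|j'] //=; rewrite ?orbF //=.
  by rewrite leqNgt ltn_ord.
by move=> /eqP E; congr inr; apply: val_inj.
Qed.

Lemma nbc (w : V) : e cc w -> (exists2 i : 'I_t, t - k <= i & w = DD i) \/ (exists j, w = SS j).
Proof.
rewrite spE; case: w => [[[]|i']|j'] //= H; [left; exists i' | right; exists j'] => //.
by move: H; rewrite orbF.
Qed.

Lemma sp_sym : symmetric e. Proof. by move=> a b; rewrite !spE orbC. Qed.
Lemma sp_irr : irreflexive e. Proof. by case=> [[[]|i]|j]; rewrite spE. Qed.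


Definition AA : {set 'I_t} := [set i : 'I_t | t - k <= i].

Lemma sum_DD (g : {ffun V -> 'I_3}) :
  \sum_(i < t) g (DD i) = \sum_(j < t - k) g (LL j) + \sum_(i in AA) g (DD i).
Proof.
rewrite (bigID (fun i : 'I_t => i < t - k)) /= (big_ord_narrow le_tk).
apply: f_equal2 => //; apply: eq_bigl => i.
rewrite /AA inE. by case: ltnP.
Qed.

Lemma sp_lb (e' : rel V) (g : {ffun V -> 'I_3}) : (forall a b, e' a b -> e a b) ->
  is_TRDF e' g ->
  2 + 2 * (t - k) <= weight g /\
  ((forall w, e' cc w -> exists2 i, i \in AA & w = DD i) -> 3 + 2 * (t - k) <= weight g).
Proof.
move=> sub Hg; rewrite weight_sp sum_DD.
have legs : 2 * (t - k) <= \sum_(j < t - k) g (LL j) + \sum_(j < t - k) g (SS j).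
  rewrite -big_split /=.
  apply: (@leq_trans (\sum_(j < t - k) 2)); first by rewrite sum_nat_const card_ord mulnC.
  apply: leq_sum => j _.
  case: (posnP (g (LL j))) => [H0|Hp].
    have [w [uw gw]] := trdf0 Hg H0.
    by rewrite -(nbL (sub _ _ uw)) gw addnC leq_addr.
  have [w [uw gw]] := trdfp Hg Hp.
  by move: gw; rewrite (nbL (sub _ _ uw)) => H; exact: (leq_add Hp H).
have h1 : t - k < t by lia.
have h2 : (t - k).+1 < t by lia.
have := @star_bound _ e' g cc _ DD AA (Ordinal h1) (Ordinal h2) Hg.
rewrite !inE /= leqnn leqnSn => /(_ isT isT).
have ne : Ordinal h1 != Ordinal h2 by apply/eqP => /(congr1 val) /= /n_Sn.
move=> /(_ ne) [].
  by move=> i w; rewrite inE => Hi /sub; apply: nbD.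
move: legs; set L1 := \sum_(j < t - k) g (LL j); set S1 := \sum_(j < t - k) g (SS j).
set LA := \sum_(i in AA) g (DD i).
move=> legs c2 c3; split; first lia.
by move=> H; have := c3 H; lia.
Qed.


Definition hh : {ffun V -> 'I_3} := [ffun u : V =>
  match u with
  | inl (inl _) => inord 2
  | inl (inr i) => if (i : nat) < t - k then inord 1 else ord0
  | inr _ => inord 1
  end].

Lemma hh_c : hh cc = 2 :> nat. Proof. by rewrite ffunE inordK. Qed.
Lemma hh_S j : hh (SS j) = 1 :> nat. Proof. by rewrite ffunE inordK. Qed.
Lemma hh_D (i : 'I_t) : hh (DD i) = (i < t - k) :> nat.
Proof. by rewrite ffunE; case: ifP => //; rewrite inordK. Qed.

Lemma weight_hh : weight hh = 2 + 2 * (t - k).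
Proof.
have E1 : \sum_(j < t - k) hh (SS j) = t - k.
  rewrite (eq_bigr (fun j => 1)); last by move=> j _; rewrite hh_S.
  by rewrite sum_nat_const card_ord muln1.
have E2 : \sum_(i < t) hh (DD i) = t - k.
  rewrite (eq_bigr (fun i : 'I_t => if i < t - k then 1 else 0)); last first.
    by move=> i _; rewrite hh_D; case: ifP.
  rewrite -big_mkcond /= (big_ord_narrow le_tk) /= sum_nat_const card_ord muln1 //.
by rewrite weight_sp hh_c E1 E2; lia.
Qed.

Lemma hh_TRDF (e' : rel V) j0 : (forall a b, e' a b -> e a b) -> symmetric e' ->
  no_isolated e' -> e' cc (SS j0) -> is_TRDF e' hh.
Proof.
move=> sub sym /forallP Ni cS; apply/forallP => u.
have [w uw] := existsP (Ni u).
case: u uw => [[[]|i]|j] uw.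
- have := hh_c; rewrite /cc => ->; apply/existsP; exists (SS j0); by rewrite cS hh_S.
- case: (ltnP i (t - k)) => Hi.
  + have E : LL (Ordinal Hi) = inl (inr i) by rewrite /LL /DD; congr (inl (inr _)); apply: val_inj.
    have uw' : e' (LL (Ordinal Hi)) w by rewrite E.
    have := hh_D i; rewrite /DD => ->; rewrite Hi /=; apply/existsP; exists w; rewrite uw.
    by rewrite (nbL (sub _ _ uw')) hh_S.
  + have := hh_D i; rewrite /DD => ->; rewrite ltnNge Hi /= andbT; apply/existsP; exists w; rewrite uw.
    by rewrite (nbD Hi (sub _ _ uw)) hh_c.
- have := hh_S j; rewrite /SS => ->; apply/existsP; exists (LL j).
  have [w' lw'] := existsP (Ni (LL j)).
  have lS : e' (SS j) (LL j) by rewrite sym -(nbL (sub _ _ lw')).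
  rewrite /SS in lS; rewrite lS.
  by rewrite /LL hh_D /= ltn_ord.
Qed.


Lemma part3 : b_tR e = Some (t - k).
Proof.
have h0 : 0 < t - k by lia.
have h1 : t - k < t by lia.
pose j0 : 'I_(t - k) := Ordinal h0.
have Ni_e : no_isolated e.
  apply/forallP => u; apply/existsP.
  case: u => [[[]|i]|j].
  - by exists (SS j0); rewrite e_cS.
  - case: (ltnP i (t - k)) => Hi.
      by exists (SS (Ordinal Hi)); rewrite (e_DS i (Ordinal Hi)).
    by exists cc; rewrite sp_sym (e_cD i).
  - by exists cc; rewrite sp_sym e_cS.
have hhT : is_TRDF e hh by apply: (hh_TRDF (j0 := j0)) => //; exact: sp_sym.
have gam_e : gamma_tR e = 2 + 2 * (t - k).
  apply/eqP; rewrite eqn_leq -{1}weight_hh gamma_le //=.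
  apply: gamma_ge; last by exists hh.
  by move=> f Hf; case: (sp_lb (fun a b (H : e a b) => H) Hf).
set E0 := [set [set cc; SS j] | j in [set: 'I_(t - k)]].
have inE0 a b : [set a; b] \in E0 -> exists j, (a = cc /\ b = SS j) \/ (a = SS j /\ b = cc).
  by case/imsetP => j _ /set2_eq H; exists j.
have cE0 : #|E0| = t - k.
  rewrite card_imset ?cardsT ?card_ord // => j1 j2 /set2_eq [[_ E]|[E _]] //.
  by case: E.
have Ni0 : no_isolated (del_edges e E0).
  apply/forallP => u; apply/existsP.
  case: u => [[[]|i]|j].
  - exists (DD (Ordinal h1)); rewrite /del_edges /= e_cD /= leqnn /=.
    by apply/negP => /inE0[j [[_ E]|[E _]]].
  - case: (ltnP i (t - k)) => Hi.
      exists (SS (Ordinal Hi)); rewrite /del_edges /= (e_DS i (Ordinal Hi)) /= eqxx /=.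
      by apply/negP => /inE0[j [[E _]|[E _]]].
    exists cc; rewrite /del_edges /= sp_sym (e_cD i) Hi /=.
    by apply/negP => /inE0[j [[E _]|[E _]]].
  - exists (LL j); rewrite /del_edges /= sp_sym /LL (e_DS _ j) eqxx /=.
    by apply/negP => /inE0[j' [[E _]|[_ E]]].
have B0 : tR_bondage_set e E0.
  apply/and3P; split => //.
    by apply/subsetP => s /imsetP[j _ ->]; apply: edge_in; exact: e_cS.
  rewrite gam_e; apply: gamma_ge; last by exists (ones V); apply: ones_TRDF.
  move=> f Hf; have [_ H] := sp_lb (@del_sub _ e E0) Hf; apply: H.
  move=> w /andP[cw nw]; case: (nbc cw) => [[i Hi ->]|[j Ej]].
    by exists i; rewrite // /AA inE.
  by rewrite Ej in nw; case/negP: nw; apply/imsetP; exists j.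
apply: (btR_eq B0 cE0) => E BE.
rewrite leqNgt; apply/negP => lt.
have [j1 nj1] : exists j, [set cc; SS j] \notin E.
  apply/existsP; apply: contraLR lt; rewrite negb_exists -leqNgt => /forallP H.
  rewrite -cE0; apply: subset_leq_card; apply/subsetP => s /imsetP[j _ ->].
  by move: (H j); rewrite negbK.
case/and3P: BE => _ NiE.
rewrite gam_e; apply/negP; rewrite -leqNgt -weight_hh; apply: gamma_le.
apply: (hh_TRDF (j0 := j1)) => //.
- exact: del_sub.
- by move=> a b; rewrite /del_edges /= sp_sym setUC.
Qed.

End Spider.

Theorem mainTheorem10 :
  (forall (V : finType) (e : rel V) (r x v : V),
     is_tree e -> height_one e r x -> e x v -> ~~ child e r x v ->
     1 <= nleaves e v -> 2 <= nleaves e x -> b_tR e = Some 1)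
  /\
  (forall (V : finType) (e : rel V) (r x v : V),
     is_tree e -> height_one e r x -> e x v -> ~~ child e r x v ->
     2 <= nleaves e v -> nleaves e x = 1 ->
     exists b, b_tR e = Some b /\ b <= deg e v - nleaves e v)
  /\
  (forall k t : nat, 3 <= t -> 2 <= k <= t.-1 ->
     b_tR (spider_rel k t) = Some (t - k)).
Proof.
split; first exact: part1.
split; first exact: part2.
by move=> k t t3 kt; apply: part3.
Qed.
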